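(* Let $X$ be a real Hausdorff locally convex topological vector space, let $f:X\to\overline{\mathbb R}$ be proper, convex and lower semicontinuous, and let $U\subseteq\operatorname{dom} f$ be segment-dense in $\operatorname{dom} f$. Then $f=\overline{f_U}$ on $X$ and $\inf_{x\in U}f(x)=\inf_{x\in X}f(x)$.
   Context: $\overline{\mathbb R}=\mathbb R\cup\{\pm\infty\}$; $\operatorname{dom} f=\{x:f(x)<+\infty\}$; proper: $\operatorname{dom} f\ne\emptyset$ and $f>-\infty$. $\operatorname{epi} f_U=\{(u,r)\in U\times\mathbb R:f(u)\le r\}$ and $\overline{f_U}:X\to\overline{\mathbb R}$ is the function whose epigraph is $\operatorname{cl}(\operatorname{epi} f_U)$ in $X\times\mathbb R$, i.e. $\overline{f_U}(x)=\inf\{r:(x,r)\in\operatorname{cl}(\operatorname{epi} f_U)\}$ ($\inf\emptyset=+\infty$). $[x,y]=\{x+t(y-x):t\in[0,1]\}$. Segment-dense: for convex $V$ and $U\subseteq V$, $U$ is segment-dense in $V$ if for each $x\in V$ there exists $y\in U$ such that $x$ is a cluster point of $[x,y]\cap U$. *)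

(* Defs.v *)
From Stdlib Require Import Reals Lra Classical.
Open Scope R_scope.

Inductive ER : Type := Fin (r : R) | PInf | NInf.

Definition ER_le (a b : ER) : Prop :=
  match a, b with
  | NInf, _ => True
  | _, PInf => True
  | Fin x, Fin y => x <= y
  | _, _ => False
  end.

Definition is_ERinf (S : ER -> Prop) (m : ER) : Prop :=
  (forall y, S y -> ER_le m y) /\
  (forall l, (forall y, S y -> ER_le l y) -> ER_le l m).

Record LCS : Type := {
  car :> Type;
  vzero : car;
  vadd : car -> car -> car;
  vopp : car -> car;
  vscal : R -> car -> car;
  vadd_assoc : forall x y z, vadd x (vadd y z) = vadd (vadd x y) z;
  vadd_comm : forall x y, vadd x y = vadd y x;
  vadd_zero : forall x, vadd x vzero = x;
  vadd_opp : forall x, vadd x (vopp x) = vzero;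
  vscal_one : forall x, vscal 1 x = x;
  vscal_assoc : forall a b x, vscal a (vscal b x) = vscal (a * b) x;
  vscal_distr_l : forall a x y, vscal a (vadd x y) = vadd (vscal a x) (vscal a y);
  vscal_distr_r : forall a b x, vscal (a + b) x = vadd (vscal a x) (vscal b x);
  is_open : (car -> Prop) -> Prop;
  open_full : is_open (fun _ => True);
  open_inter : forall A B, is_open A -> is_open B -> is_open (fun x => A x /\ B x);
  open_union : forall (F : (car -> Prop) -> Prop),
      (forall A, F A -> is_open A) -> is_open (fun x => exists A, F A /\ A x);
  vadd_cont : forall x y W, is_open W -> W (vadd x y) ->
      exists A B, is_open A /\ A x /\ is_open B /\ B y /\
        (forall u v, A u -> B v -> W (vadd u v));
  vscal_cont : forall a x W, is_open W -> W (vscal a x) ->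
      exists d B, 0 < d /\ is_open B /\ B x /\
        (forall b u, Rabs (b - a) < d -> B u -> W (vscal b u));
  hausdorff : forall x y, x <> y ->
      exists A B, is_open A /\ A x /\ is_open B /\ B y /\
        (forall z, ~ (A z /\ B z));
  locally_convex : forall W, is_open W -> W vzero ->
      exists V, is_open V /\ V vzero /\ (forall z, V z -> W z) /\
        (forall u v t, V u -> V v -> 0 <= t <= 1 ->
           V (vadd (vscal (1 - t) u) (vscal t v)))
}.

Arguments vadd {_}. Arguments vscal {_}. Arguments vopp {_}.
Arguments is_open {_}.

Generalizable Variables X.

Definition dom `{X : LCS} (f : X -> ER) (x : X) : Prop := f x <> PInf.

Definition proper `{X : LCS} (f : X -> ER) : Prop :=
  (exists x, dom f x) /\ (forall x, f x <> NInf).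

(* convex: the epigraph is convex *)
Definition convex_fun `{X : LCS} (f : X -> ER) : Prop :=
  forall x y r s t, ER_le (f x) (Fin r) -> ER_le (f y) (Fin s) -> 0 <= t <= 1 ->
    ER_le (f (vadd (vscal (1 - t) x) (vscal t y))) (Fin ((1 - t) * r + t * s)).

Definition lsc `{X : LCS} (f : X -> ER) : Prop :=
  forall x r, ~ ER_le (f x) (Fin r) ->
    exists W, is_open W /\ W x /\ (forall z, W z -> ~ ER_le (f z) (Fin r)).

Definition convex_set `{X : LCS} (V : X -> Prop) : Prop :=
  forall u v t, V u -> V v -> 0 <= t <= 1 -> V (vadd (vscal (1 - t) u) (vscal t v)).

Definition segment `{X : LCS} (x y : X) (z : X) : Prop :=
  exists t, 0 <= t <= 1 /\ z = vadd x (vscal t (vadd y (vopp x))).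

Definition cluster_point `{X : LCS} (S : X -> Prop) (x : X) : Prop :=
  forall W, is_open W -> W x -> exists z, S z /\ W z /\ z <> x.

Definition segment_dense `{X : LCS} (U V : X -> Prop) : Prop :=
  forall x, V x -> exists y, U y /\ cluster_point (fun z => segment x y z /\ U z) x.

Definition epi_U `{X : LCS} (f : X -> ER) (U : X -> Prop) (p : X * R) : Prop :=
  U (fst p) /\ ER_le (f (fst p)) (Fin (snd p)).

(* closure in the product topology of X x R *)
Definition closure_XR `{X : LCS} (E : X * R -> Prop) (p : X * R) : Prop :=
  forall W e, is_open W -> W (fst p) -> 0 < e ->
    exists q, E q /\ W (fst q) /\ Rabs (snd q - snd p) < e.

(* overline{f_U}(x) = inf { r : (x,r) in cl(epi f_U) } (inf of empty set = +oo) *)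
Definition is_closure_fU_value `{X : LCS} (f : X -> ER) (U : X -> Prop) (x : X) (m : ER) : Prop :=
  is_ERinf (fun y => exists r, y = Fin r /\ closure_XR (epi_U f U) (x, r)) m.

(* Main.v *)
Require Import Defs.
From Stdlib Require Import Reals.
From Stdlib Require Import Lra Classical.
Open Scope R_scope.

Section V.
Variable X : LCS.
Implicit Types x y z u v w : X.

Lemma add0l x : vadd (vzero X) x = x.
Proof. rewrite vadd_comm; apply vadd_zero. Qed.

Lemma oppl x : vadd (vopp x) x = vzero X.
Proof. rewrite vadd_comm; apply vadd_opp. Qed.

Lemma add_cancel (a b c : X) : vadd a b = vadd a c -> b = c.
Proof.
  intro H.
  assert (E : vadd (vopp a) (vadd a b) = vadd (vopp a) (vadd a c)) by (rewrite H; auto).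
  rewrite !vadd_assoc, oppl, !add0l in E. exact E.
Qed.

Lemma scal0l x : vscal 0 x = vzero X.
Proof.
  apply (add_cancel (vscal 0 x)).
  rewrite vadd_zero, <- vscal_distr_r. f_equal. ring.
Qed.

Lemma scal0r (a : R) : vscal a (vzero X) = vzero X.
Proof.
  apply (add_cancel (vscal a (vzero X))).
  rewrite vadd_zero, <- vscal_distr_l, vadd_zero. auto.
Qed.

Lemma scal_neg t x : vscal (- t) x = vopp (vscal t x).
Proof.
  apply (add_cancel (vscal t x)).
  rewrite vadd_opp, <- vscal_distr_r. replace (t + - t) with 0 by ring.
  apply scal0l.
Qed.

Lemma scal_opp t x : vscal t (vopp x) = vopp (vscal t x).
Proof.
  apply (add_cancel (vscal t x)).
  rewrite vadd_opp, <- vscal_distr_l, vadd_opp. apply scal0r.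
Qed.

Lemma conv_id t x y :
  vadd (vscal (1 - t) x) (vscal t y) = vadd x (vscal t (vadd y (vopp x))).
Proof.
  unfold Rminus. rewrite vscal_distr_r, vscal_one, scal_neg.
  rewrite vscal_distr_l, scal_opp.
  rewrite <- vadd_assoc. f_equal. apply vadd_comm.
Qed.

Lemma diff_id x v : vadd (vadd x v) (vopp x) = v.
Proof.
  rewrite (vadd_comm _ x v), <- vadd_assoc, vadd_opp, vadd_zero. auto.
Qed.

Lemma transl_open (V : X -> Prop) x : is_open V -> V (vzero X) ->
  exists N, is_open N /\ N x /\ (forall z, N z -> V (vadd z (vopp x))).
Proof.
  intros HV H0.
  exists (fun z => exists A, (is_open A /\ (forall u, A u -> V (vadd u (vopp x)))) /\ A z).
  split; [|split].
  - apply (open_union X (fun A => is_open A /\ (forall u, A u -> V (vadd u (vopp x))))).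
    intros A [HA _]; exact HA.
  - rewrite <- (vadd_opp X x) in H0.
    destruct (vadd_cont X x (vopp x) V HV H0) as [A [B [HA [HAx [HB [HBx HAB]]]]]].
    exists A. split; [split|]; auto.
  - intros z [A [[_ HA] Az]]. auto.
Qed.
End V.

Lemma ER_le_trans_fin (u : ER) q r : ER_le u (Fin q) -> q <= r -> ER_le u (Fin r).
Proof. destruct u; simpl; intros; auto; lra. Qed.

Lemma closure_pt (X : LCS) (f : X -> ER) (U : X -> Prop) x a :
  proper f -> convex_fun f -> (forall x, U x -> dom f x) ->
  segment_dense U (dom f) -> f x = Fin a -> closure_XR (epi_U f U) (x, a).
Proof.
  intros Hp Hc HU Hsd Hfx W e HW HWx He. simpl in HWx |- *.
  assert (Hdx : dom f x) by (unfold dom; rewrite Hfx; discriminate).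
  destruct (Hsd x Hdx) as [y [Uy Hcl]].
  assert (Hdy := HU y Uy).
  destruct (f y) as [b| |] eqn:Hfy.
  2: { exfalso; apply Hdy; exact Hfy. }
  2: { exfalso; apply (proj2 Hp y); exact Hfy. }
  set (d := vadd y (vopp x)).
  assert (Hd : d <> vzero X).
  { intro Hd0. destruct (Hcl (fun _ => True) (open_full X) I) as [z [[[t [_ Hz]] _] [_ Hzx]]].
    apply Hzx. rewrite Hz. fold d. rewrite Hd0, scal0r, vadd_zero. auto. }
  set (k := Rabs (b - a)).
  assert (Hk : 0 <= k) by apply Rabs_pos.
  set (dl := Rmin 1 (e / (k + 1))).
  assert (Hdl0 : 0 < dl).
  { unfold dl. apply Rmin_glb_lt; [lra|]. apply Rdiv_lt_0_compat; lra. }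
  assert (Hdl1 : dl <= 1) by apply Rmin_l.
  assert (Hdle : dl * k < e).
  { assert (H1 : dl <= e / (k + 1)) by apply Rmin_r.
    assert (H2 : dl * (k + 1) <= e).
    { apply Rle_trans with (e / (k + 1) * (k + 1)).
      - apply Rmult_le_compat_r; lra.
      - right; field; lra. }
    nra. }
  assert (Hdd : vscal dl d <> vzero X).
  { intro H0. apply Hd.
    replace d with (vscal (/ dl) (vscal dl d)).
    - rewrite H0. apply scal0r.
    - rewrite vscal_assoc. replace (/ dl * dl) with 1 by (field; lra). apply vscal_one. }
  destruct (hausdorff X _ _ (not_eq_sym Hdd)) as [A [B [HA [HA0 [HB [HBd HAB]]]]]].
  destruct (locally_convex X A HA HA0) as [V [HV [HV0 [HVA HVc]]]].
  destruct (transl_open X V x HV HV0) as [N [HN [HNx HNV]]].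
  destruct (Hcl (fun z => W z /\ N z) (open_inter X W N HW HN) (conj HWx HNx))
    as [z [[[t [Ht Hz]] Uz] [[Wz Nz] Hzx]]].
  assert (Htd : V (vscal t d)).
  { assert (H := HNV z Nz). rewrite Hz in H. rewrite diff_id in H. exact H. }
  assert (Htl : t < dl).
  { destruct (Rlt_or_le t dl) as [H|H]; auto. exfalso.
    set (s := dl / t).
    assert (Hs : 0 <= s <= 1).
    { unfold s; split.
      - apply Rlt_le, Rdiv_lt_0_compat; lra.
      - apply Rmult_le_reg_r with t; [lra|]. field_simplify; lra. }
    assert (Hv := HVc _ _ s HV0 Htd Hs).
    rewrite scal0r, add0l, vscal_assoc in Hv.
    replace (s * t) with dl in Hv by (unfold s; field; lra).
    apply (HAB (vscal dl d)). split; auto. }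
  exists (z, (1 - t) * a + t * b). simpl. split; [split|split]; auto.
  - simpl. rewrite Hz. fold d. unfold d. rewrite <- conv_id.
    apply Hc; [rewrite Hfx|rewrite Hfy|]; simpl; lra.
  - replace ((1 - t) * a + t * b - a) with (t * (b - a)) by ring.
    rewrite Rabs_mult, (Rabs_right t) by lra. fold k. nra.
Qed.

Lemma closure_lb (X : LCS) (f : X -> ER) (U : X -> Prop) x r :
  proper f -> lsc f -> closure_XR (epi_U f U) (x, r) -> ER_le (f x) (Fin r).
Proof.
  intros Hp Hl Hcl.
  apply NNPP; intro Hn.
  assert (Hex : exists r', r < r' /\ ~ ER_le (f x) (Fin r')).
  { destruct (f x) as [c| |] eqn:E.
    - simpl in Hn. exists ((c + r) / 2). split; [lra|]. simpl; lra.
    - exists (r + 1). split; [lra|]. simpl; auto.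
    - exfalso; apply (proj2 Hp x); auto. }
  destruct Hex as [r' [Hr' Hn']].
  destruct (Hl x r' Hn') as [W [HW [HWx HWn]]].
  destruct (Hcl W (r' - r) HW HWx ltac:(lra)) as [[q1 q2] [[Uq Hq] [Wq Hq2]]].
  simpl in *. apply (HWn q1 Wq).
  apply ER_le_trans_fin with q2; auto.
  apply Rabs_def2 in Hq2. lra.
Qed.

Theorem mainTheorem7 (X : LCS) (f : X -> ER) (U : X -> Prop) :
  proper f -> convex_fun f -> lsc f ->
  (forall x, U x -> dom f x) ->
  segment_dense U (dom f) ->
  (forall x, is_closure_fU_value f U x (f x)) /\
  (forall m : ER,
     is_ERinf (fun y => exists x, U x /\ y = f x) m <->
     is_ERinf (fun y => exists x, y = f x) m).
Proof.
  intros Hp Hc Hl HU Hsd.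
  split.
  - intro x. split.
    + intros y [r [-> Hr]]. eapply closure_lb; eauto.
    + intros l Hlb. destruct (f x) as [a| |] eqn:E.
      * apply Hlb. exists a. split; auto. eapply closure_pt; eauto.
      * destruct l; simpl; auto.
      * exfalso; apply (proj2 Hp x); auto.
  - assert (Heq : forall l, (forall y, (exists x, U x /\ y = f x) -> ER_le l y) <->
                             (forall y, (exists x, y = f x) -> ER_le l y)).
    { intro l; split.
      - intros H y [x ->].
        destruct (f x) as [a| |] eqn:E.
        + destruct l as [c| |].
          * simpl. apply NNPP; intro Hca.
            destruct (closure_pt X f U x a Hp Hc HU Hsd E (fun _ => True) (c - a)
                        (open_full X) I ltac:(lra)) as [[q1 q2] [[Uq Hq] [_ Hq2]]].
            simpl in *. assert (H1 := H (f q1) (ex_intro _ q1 (conj Uq eq_refl))).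
            apply Rabs_def2 in Hq2.
            destruct (f q1); simpl in *; lra.
          * exfalso. destruct (proj1 Hp) as [x0 Hx0].
            destruct (Hsd x0 Hx0) as [y [Uy _]].
            assert (H1 := H (f y) (ex_intro _ y (conj Uy eq_refl))).
            apply (HU y Uy). destruct (f y); simpl in H1; tauto.
          * simpl; auto.
        + destruct l; simpl; auto.
        + exfalso; apply (proj2 Hp x); auto.
      - intros H y [x [_ ->]]. apply H. exists x; auto. }
    intro m; split; intros [H1 H2]; split.
    + apply Heq; auto.
    + intros l Hl'. apply H2. apply Heq; auto.
    + apply Heq; auto.
    + intros l Hl'. apply H2. apply Heq; auto.
Qed.
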